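(* For $\psi\in\mathbb{R}$ let $R^{xw}_\psi:\mathbb{R}^4\to\mathbb{R}^4$ be the linear map with matrix $\begin{pmatrix}\cos\psi&0&0&-\sin\psi\\0&1&0&0\\0&0&1&0\\ \sin\psi&0&0&\cos\psi\end{pmatrix}$, and let $Q(\psi)=\pi\big(R^{xw}_\psi(\mathcal{C})\setminus\{(0,0,0,1)\}\big)\subset\mathbb{R}^3$, where $\mathcal{C}=\{(x,y,z,w): x^2+y^2=\tfrac12=z^2+w^2\}$. Then: (i) $Q(0)$ has generalized reflectional symmetry along the $z$-axis. (ii) If $0<|\psi|<\pi/2$, then $Q(\psi)$ has generalized reflectional symmetry along the vertical line $\{(\tan\psi,0,t):t\in\mathbb{R}\}$; and if $0<|\psi|\le\pi/2$, then $Q(\psi)$ has generalized reflectional symmetry along the horizontal line $\{(-\cot\psi,t,0):t\in\mathbb{R}\}$. (iii) Let $R$ be the rotation of $\mathbb{R}^3$ about the $x$-axis by the angle $\pi/2$. Then (a) $Q(\psi+\pi/2)=R(Q(\psi))$ and (b) $Q(\psi+\pi)=Q(\psi)$ for all $\psi$. In particular, $Q(\psi)$ has generalized reflectional symmetry along some line for every $\psi\in\mathbb{R}$.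
   Context: Stereographic projection $\pi:\mathbb{S}^3\setminus\{(0,0,0,1)\}\to\mathbb{R}^3$ is $\pi(x,y,z,w)=\frac{1}{1-w}(x,y,z)$, where $\mathbb{S}^3$ is the unit sphere of $\mathbb{R}^4$. For $\mathbf{a}\in\mathbb{R}^3$ and $\rho>0$ let $\psi_{\mathbf{a},\rho}:\mathbb{R}^3\setminus\{\mathbf{a}\}\to\mathbb{R}^3\setminus\{\mathbf{a}\}$, $\psi_{\mathbf{a},\rho}(\mathbf{p})=\rho^2\frac{\mathbf{p}-\mathbf{a}}{|\mathbf{p}-\mathbf{a}|^2}+\mathbf{a}$ (reflection about the sphere of center $\mathbf{a}$, radius $\rho$). A set $Q\subset\mathbb{R}^3$ has generalized reflectional symmetry along a line $l$ if there exist $\mathbf{m}_0\in l$ and $\rho_0>0$ such that for every $\mathbf{a}\in l$, with $\rho=\sqrt{|\mathbf{a}-\mathbf{m}_0|^2+\rho_0^2}$, one has $\psi_{\mathbf{a},\rho}(Q\setminus\{\mathbf{a}\})=Q\setminus\{\mathbf{a}\}$. *)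

(* Defs.v *)
From Stdlib Require Import Reals Lra.
Open Scope R_scope.

Record V3 := mkV3 { v3x : R; v3y : R; v3z : R }.
Record V4 := mkV4 { v4x : R; v4y : R; v4z : R; v4w : R }.

Definition V3add (p q : V3) : V3 := mkV3 (v3x p + v3x q) (v3y p + v3y q) (v3z p + v3z q).
Definition V3sub (p q : V3) : V3 := mkV3 (v3x p - v3x q) (v3y p - v3y q) (v3z p - v3z q).
Definition V3scal (c : R) (p : V3) : V3 := mkV3 (c * v3x p) (c * v3y p) (c * v3z p).
Definition V3norm2 (p : V3) : R := v3x p ^ 2 + v3y p ^ 2 + v3z p ^ 2.

(* Stereographic projection pi(x,y,z,w) = (x,y,z)/(1-w) (used off the north pole). *)
Definition stereo (u : V4) : V3 :=
  mkV3 (v4x u / (1 - v4w u)) (v4y u / (1 - v4w u)) (v4z u / (1 - v4w u)).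

Definition north_pole : V4 := mkV4 0 0 0 1.

Definition sphere_inv (a : V3) (rho : R) (p : V3) : V3 :=
  V3add (V3scal (rho ^ 2 / V3norm2 (V3sub p a)) (V3sub p a)) a.

Definition gen_refl_sym (Q : V3 -> Prop) (l : V3 -> Prop) : Prop :=
  exists m0 : V3, l m0 /\ exists rho0 : R, 0 < rho0 /\
    forall a : V3, l a ->
      let rho := sqrt (V3norm2 (V3sub a m0) + rho0 ^ 2) in
      forall p : V3,
        (Q p /\ p <> a) <->
        (exists q : V3, Q q /\ q <> a /\ p = sphere_inv a rho q).

Definition line (p0 d : V3) : V3 -> Prop := fun p => exists t : R, p = V3add p0 (V3scal t d).

Definition clifford (u : V4) : Prop :=
  v4x u ^ 2 + v4y u ^ 2 = 1 / 2 /\ v4z u ^ 2 + v4w u ^ 2 = 1 / 2.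

Definition Rxw (psi : R) (u : V4) : V4 :=
  mkV4 (cos psi * v4x u - sin psi * v4w u) (v4y u) (v4z u)
       (sin psi * v4x u + cos psi * v4w u).

Definition Qpsi (psi : R) : V3 -> Prop :=
  fun p => exists u : V4, clifford u /\ Rxw psi u <> north_pole /\ p = stereo (Rxw psi u).

Definition rotX (p : V3) : V3 :=
  mkV3 (v3x p) (cos (PI / 2) * v3y p - sin (PI / 2) * v3z p)
       (sin (PI / 2) * v3y p + cos (PI / 2) * v3z p).

(* Main.v *)
Require Import Defs.
From Stdlib Require Import Reals.
Open Scope R_scope.
From Stdlib Require Import Lra.

Definition dot4 (u v : V4) := v4x u * v4x v + v4y u * v4y v + v4z u * v4z v + v4w u * v4w v.
Definition Hn (n u : V4) : V4 := let k := 2 * dot4 u n / dot4 n n in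
  mkV4 (v4x u - k * v4x n) (v4y u - k * v4y n) (v4z u - k * v4z n) (v4w u - k * v4w n).
Definition nv (a : V3) := mkV4 (v3x a) (v3y a) (v3z a) (-1).
Definition onS3 u := dot4 u u = 1.
Definition invst (p : V3) : V4 := let P := V3norm2 p + 1 in
  mkV4 (2 * v3x p / P) (2 * v3y p / P) (2 * v3z p / P) ((V3norm2 p - 1) / P).

Lemma norm_pos p : 0 < V3norm2 p + 1.
Proof. destruct p; unfold V3norm2; simpl; nra. Qed.

Lemma dotnn a : dot4 (nv a) (nv a) = V3norm2 a + 1.
Proof. destruct a; unfold dot4, V3norm2, nv; simpl; ring. Qed.

Lemma S3_N v : onS3 v -> v4w v = 1 -> v = north_pole.
Proof.
  destruct v as [x y z w]; unfold onS3, dot4, north_pole; simpl; intros H Hw; subst w.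
  assert (x = 0) by nra. assert (y = 0) by nra. assert (z = 0) by nra. subst; reflexivity.
Qed.

Lemma A_inv v : onS3 v -> v <> north_pole -> v = invst (stereo v).
Proof.
  intros HS HN. assert (Hw : v4w v <> 1) by (intro; apply HN; apply S3_N; auto).
  destruct v as [x y z w]; unfold onS3, dot4 in HS; simpl in *.
  assert (D : 1 - w <> 0) by lra.
  unfold invst, stereo, V3norm2; simpl.
  set (S := x / (1 - w) * (x / (1 - w) * 1) + y / (1 - w) * (y / (1 - w) * 1) +
       z / (1 - w) * (z / (1 - w) * 1)).
  assert (E : S + 1 = 2 / (1 - w)).
  { unfold S. transitivity ((x*x+y*y+z*z)/((1-w)*(1-w)) + 1). field; auto.
    replace (x*x+y*y+z*z) with (1 - w*w) by lra. field; auto. }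
  assert (E2 : S - 1 = 2 / (1 - w) - 2) by lra.
  rewrite E, E2. f_equal; field; auto.
Qed.

Lemma H_invol n u : dot4 n n <> 0 -> Hn n (Hn n u) = u.
Proof.
  destruct n as [a b c d], u as [x y z w]; unfold Hn, dot4; simpl; intro H.
  f_equal; field; auto.
Qed.

Lemma H_norm n u : dot4 n n <> 0 -> dot4 (Hn n u) (Hn n u) = dot4 u u.
Proof.
  destruct n as [a b c d], u as [x y z w]; unfold Hn, dot4; simpl; intro H.
  field; auto.
Qed.

Lemma H_w a p : v4w (Hn (nv a) (invst p)) =
   1 - 2 * V3norm2 (V3sub p a) / ((V3norm2 p + 1) * (V3norm2 a + 1)).
Proof.
  pose proof (norm_pos p); pose proof (norm_pos a).
  destruct a as [a1 a2 a3], p as [p1 p2 p3]; unfold Hn, invst, nv, dot4, V3sub, V3norm2 in *; simpl in *.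
  field; lra.
Qed.

Lemma D0 p a : V3norm2 (V3sub p a) = 0 -> p = a.
Proof.
  destruct a as [a1 a2 a3], p as [p1 p2 p3]; unfold V3sub, V3norm2; simpl; intro H.
  pose proof (pow2_ge_0 (p1 - a1)); pose proof (pow2_ge_0 (p2 - a2)); pose proof (pow2_ge_0 (p3 - a3)).
  assert ((p1 - a1)^2 = 0) by lra. assert ((p2 - a2)^2 = 0) by lra. assert ((p3 - a3)^2 = 0) by lra.
  assert (p1 = a1) by nra. assert (p2 = a2) by nra. assert (p3 = a3) by nra. subst; auto.
Qed.

Lemma B2 a p : p <> a -> stereo (Hn (nv a) (invst p)) = sphere_inv a (sqrt (V3norm2 a + 1)) p.
Proof.
  intro Hpa.
  assert (HD : V3norm2 (V3sub p a) <> 0) by (intro; apply Hpa; apply D0; auto).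
  pose proof (norm_pos p); pose proof (norm_pos a).
  unfold sphere_inv. rewrite pow2_sqrt by lra.
  unfold stereo. rewrite H_w.
  revert HD H H0.
  destruct a as [a1 a2 a3], p as [p1 p2 p3]; unfold Hn, invst, nv, dot4, V3sub, V3norm2, V3add, V3scal; simpl; intros.
  f_equal; field; lra.
Qed.

Lemma sc ps : sin ps * sin ps + cos ps * cos ps = 1.
Proof. pose proof (sin2_cos2 ps). unfold Rsqr in H. lra. Qed.

Lemma R_dot ps u m : dot4 (Rxw ps u) (Rxw ps m) = dot4 u m.
Proof.
  pose proof (sc ps). destruct u as [x y z w], m as [x1 y1 z1 w1]; unfold dot4, Rxw; simpl.
  set (s := sin ps) in *; set (c := cos ps) in *.
  transitivity ((s*s+c*c) * (x*x1+w*w1) + y*y1 + z*z1). ring.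
  rewrite H; ring.
Qed.

Lemma R_H ps m u : Hn (Rxw ps m) (Rxw ps u) = Rxw ps (Hn m u).
Proof.
  unfold Hn at 1. rewrite !R_dot. destruct u, m; unfold Hn, Rxw; simpl. f_equal; ring.
Qed.

Lemma R_inv ps n : Rxw ps (Rxw (- ps) n) = n.
Proof.
  pose proof (sc ps). destruct n as [x y z w]; unfold Rxw; simpl. rewrite cos_neg, sin_neg.
  set (s := sin ps) in *; set (c := cos ps) in *. f_equal.
  - transitivity ((s*s+c*c) * x). ring. rewrite H; ring.
  - transitivity ((s*s+c*c) * w). ring. rewrite H; ring.
Qed.

Lemma cliff_S3 ps u : clifford u -> onS3 (Rxw ps u).
Proof.
  intro H. unfold onS3. rewrite (R_dot ps u u).
  destruct u; unfold clifford, dot4 in *; simpl in *. lra.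
Qed.

Lemma inv_zw m u : v4x m = 0 -> v4y m = 0 -> dot4 m m <> 0 -> clifford u -> clifford (Hn m u).
Proof.
  destruct m as [a b c d], u as [x y z w]; unfold clifford, Hn, dot4; simpl; intros -> -> Hd [H1 H2].
  split.
  - rewrite <- H1; field. intro; apply Hd; lra.
  - rewrite <- H2. field. intro; apply Hd; lra.
Qed.

Lemma inv_xy m u : v4z m = 0 -> v4w m = 0 -> dot4 m m <> 0 -> clifford u -> clifford (Hn m u).
Proof.
  destruct m as [a b c d], u as [x y z w]; unfold clifford, Hn, dot4; simpl; intros -> -> Hd [H1 H2].
  split.
  - rewrite <- H1; field. intro; apply Hd; lra.
  - rewrite <- H2. field. intro; apply Hd; lra.
Qed.

Lemma H_north a v : onS3 v -> v <> north_pole -> (Hn (nv a) v = north_pole <-> stereo v = a).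
Proof.
  intros HS HN. pose proof (A_inv v HS HN) as Ev. set (p := stereo v) in *.
  pose proof (norm_pos p); pose proof (norm_pos a).
  split; intro HH.
  - apply D0. assert (Hw := H_w a p). rewrite <- Ev, HH in Hw. simpl in Hw.
    assert (E : 2 * V3norm2 (V3sub p a) / ((V3norm2 p + 1) * (V3norm2 a + 1)) = 0) by lra.
    replace (V3norm2 (V3sub p a)) with (2 * V3norm2 (V3sub p a) / ((V3norm2 p + 1) * (V3norm2 a + 1)) * ((V3norm2 p + 1) * (V3norm2 a + 1)) / 2) by (field; split; lra).
    rewrite E; field.
  - apply S3_N.
    + unfold onS3. rewrite H_norm. exact HS.
      rewrite dotnn. lra.
    + rewrite Ev, H_w. rewrite HH. assert (Z : V3norm2 (V3sub a a) = 0) by (unfold V3sub, V3norm2; simpl; ring). rewrite Z. rewrite HH in H. field. lra.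
Qed.

Lemma stereo_H a v : onS3 v -> v <> north_pole -> stereo v <> a ->
  stereo (Hn (nv a) v) = sphere_inv a (sqrt (V3norm2 a + 1)) (stereo v).
Proof.
  intros HS HN Ha. rewrite (A_inv v HS HN) at 1. apply B2; auto.
Qed.

Lemma sym_main psi l m0 rho0 : l m0 -> 0 < rho0 ->
  (forall a, l a -> V3norm2 (V3sub a m0) + rho0 ^ 2 = V3norm2 a + 1) ->
  (forall a, l a -> forall u, clifford u -> clifford (Hn (Rxw (- psi) (nv a)) u)) ->
  gen_refl_sym (Qpsi psi) l.
Proof.
  intros Hm0 Hr Hrho Hinv. exists m0; split; auto. exists rho0; split; auto.
  intros a Ha. cbv zeta. rewrite Hrho by auto. intro p.
  assert (Hnn : dot4 (nv a) (nv a) <> 0) by (rewrite dotnn; pose proof (norm_pos a); lra).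
  assert (KEY : forall u, clifford u -> exists u', clifford u' /\ Hn (nv a) (Rxw psi u) = Rxw psi u').
  { intros u Hu. exists (Hn (Rxw (- psi) (nv a)) u). split. apply Hinv; auto.
    rewrite <- R_H, R_inv. reflexivity. }
  split.
  - intros [[u [Hu [HN Hp]]] Hpa]. set (v := Rxw psi u) in *.
    assert (HS : onS3 v) by (apply cliff_S3; auto).
    destruct (KEY u Hu) as [u' [Hu' E]]. fold v in E.
    assert (HS' : onS3 (Hn (nv a) v)) by (unfold onS3; rewrite H_norm; auto).
    assert (HN' : Hn (nv a) v <> north_pole) by (rewrite H_north; auto; congruence).
    assert (Hqa : stereo (Hn (nv a) v) <> a).
    { rewrite <- H_north; auto. rewrite H_invol; auto. }
    exists (stereo (Hn (nv a) v)). split; [|split]; auto.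
    + exists u'. rewrite <- E. auto.
    + rewrite <- stereo_H; auto. rewrite H_invol; auto.
  - intros [q [[u [Hu [HN Hq]]] [Hqa Hp]]]. set (v := Rxw psi u) in *.
    assert (HS : onS3 v) by (apply cliff_S3; auto).
    destruct (KEY u Hu) as [u' [Hu' E]]. fold v in E.
    assert (HS' : onS3 (Hn (nv a) v)) by (unfold onS3; rewrite H_norm; auto).
    assert (HN' : Hn (nv a) v <> north_pole) by (rewrite H_north; auto; congruence).
    assert (Hp' : p = stereo (Hn (nv a) v)) by (rewrite Hp, Hq, stereo_H; auto; congruence).
    split.
    + exists u'. rewrite <- E. auto.
    + rewrite Hp'. rewrite <- H_north; auto. rewrite H_invol; auto.
Qed.

Lemma vert psi : cos psi <> 0 -> gen_refl_sym (Qpsi psi) (line (mkV3 (tan psi) 0 0) (mkV3 0 0 1)).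
Proof.
  intro Hc.
  apply (sym_main psi _ (mkV3 (tan psi) 0 0) (sqrt (tan psi ^ 2 + 1))).
  - exists 0. unfold V3add, V3scal; simpl. f_equal; ring.
  - apply sqrt_lt_R0. pose proof (pow2_ge_0 (tan psi)). lra.
  - intros a [t ->]. rewrite pow2_sqrt by (pose proof (pow2_ge_0 (tan psi)); lra).
    unfold V3add, V3scal, V3sub, V3norm2; simpl. ring.
  - intros a [t ->] u Hu. apply inv_zw; auto.
    + unfold Rxw, nv, V3add, V3scal; simpl. rewrite cos_neg, sin_neg. unfold tan. field. auto.
    + unfold Rxw, nv, V3add, V3scal; simpl. ring.
    + rewrite R_dot, dotnn. pose proof (norm_pos (V3add (mkV3 (tan psi) 0 0) (V3scal t (mkV3 0 0 1)))). lra.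
Qed.

Lemma horiz psi : sin psi <> 0 ->
  gen_refl_sym (Qpsi psi) (line (mkV3 (- (cos psi / sin psi)) 0 0) (mkV3 0 1 0)).
Proof.
  intro Hs. set (k := - (cos psi / sin psi)).
  apply (sym_main psi _ (mkV3 k 0 0) (sqrt (k ^ 2 + 1))).
  - exists 0. unfold V3add, V3scal; simpl. f_equal; ring.
  - apply sqrt_lt_R0. pose proof (pow2_ge_0 k). lra.
  - intros a [t ->]. rewrite pow2_sqrt by (pose proof (pow2_ge_0 k); lra).
    unfold V3add, V3scal, V3sub, V3norm2; simpl. ring.
  - intros a [t ->] u Hu. apply inv_xy; auto.
    + unfold Rxw, nv, V3add, V3scal; simpl. ring.
    + unfold Rxw, nv, V3add, V3scal; simpl. rewrite cos_neg, sin_neg. unfold k. field. auto.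
    + rewrite R_dot, dotnn. pose proof (norm_pos (V3add (mkV3 k 0 0) (V3scal t (mkV3 0 1 0)))). lra.
Qed.

Definition rot4 (v : V4) := mkV4 (v4x v) (- v4z v) (v4y v) (v4w v).

Lemma rot4_N v : rot4 v = north_pole <-> v = north_pole.
Proof.
  destruct v as [x y z w]; unfold rot4, north_pole; simpl; split; intro H; injection H; intros.
  - subst. f_equal. lra.
  - subst. f_equal. ring.
Qed.

Lemma rot4_st v : stereo (rot4 v) = rotX (stereo v).
  unfold rotX; rewrite cos_PI2, sin_PI2. destruct v; unfold stereo, rot4; simpl. f_equal; unfold Rdiv; ring.


Qed.

Lemma iiia psi p : Qpsi (psi + PI / 2) p <-> exists q : V3, Qpsi psi q /\ p = rotX q.
Proof.
  assert (E1 : forall u, Rxw (psi + PI/2) u =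
     rot4 (Rxw psi (mkV4 (- v4w u) (v4z u) (- v4y u) (v4x u)))).
  { intro u. unfold Rxw, rot4; simpl. rewrite cos_plus, sin_plus, cos_PI2, sin_PI2. f_equal; ring. }
  split.
  - intros [u [Hu [HN ->]]]. rewrite E1 in *.
    set (u' := mkV4 (- v4w u) (v4z u) (- v4y u) (v4x u)) in *.
    exists (stereo (Rxw psi u')). split.
    + exists u'. split; [|split]; auto.
      * destruct u as [x y z w]; unfold clifford in *; simpl in *. lra.
      * rewrite <- rot4_N. auto.
    + apply rot4_st.
  - intros [q [[u [Hu [HN ->]]] ->]].
    set (u' := mkV4 (v4w u) (- v4z u) (v4y u) (- v4x u)).
    assert (Eu : mkV4 (- v4w u') (v4z u') (- v4y u') (v4x u') = u).
    { destruct u; unfold u'; simpl; f_equal; ring. }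
    exists u'. rewrite E1, Eu. split; [|split].
    + destruct u as [x y z w]; unfold clifford in *; simpl in *. lra.
    + rewrite rot4_N; auto.
    + symmetry; apply rot4_st.
Qed.

Lemma iiib psi p : Qpsi (psi + PI) p <-> Qpsi psi p.
Proof.
  assert (E1 : forall u, Rxw (psi + PI) u = Rxw psi (mkV4 (- v4x u) (v4y u) (v4z u) (- v4w u))).
  { intro u. unfold Rxw; simpl. rewrite cos_plus, sin_plus, cos_PI, sin_PI. f_equal; ring. }
  split.
  - intros [u [Hu [HN ->]]]. rewrite E1 in *.
    exists (mkV4 (- v4x u) (v4y u) (v4z u) (- v4w u)). split; auto.
    destruct u as [x y z w]; unfold clifford in *; simpl in *. lra.
  - intros [u [Hu [HN ->]]].
    exists (mkV4 (- v4x u) (v4y u) (v4z u) (- v4w u)). rewrite E1. simpl. rewrite !Ropp_involutive.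
    destruct u as [x y z w]; unfold clifford in *; simpl in *. split; auto. lra.
Qed.
Theorem proposition1 :
  (* (i) *)
  gen_refl_sym (Qpsi 0) (line (mkV3 0 0 0) (mkV3 0 0 1)) /\
  (* (ii) vertical line *)
  (forall psi : R, 0 < Rabs psi < PI / 2 ->
     gen_refl_sym (Qpsi psi) (line (mkV3 (tan psi) 0 0) (mkV3 0 0 1))) /\
  (* (ii) horizontal line *)
  (forall psi : R, 0 < Rabs psi <= PI / 2 ->
     gen_refl_sym (Qpsi psi) (line (mkV3 (- (cos psi / sin psi)) 0 0) (mkV3 0 1 0))) /\
  (* (iii)(a) *)
  (forall psi : R, forall p : V3,
     Qpsi (psi + PI / 2) p <-> exists q : V3, Qpsi psi q /\ p = rotX q) /\
  (* (iii)(b) *)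
  (forall psi : R, forall p : V3, Qpsi (psi + PI) p <-> Qpsi psi p) /\
  (* in particular *)
  (forall psi : R, exists p0 d : V3, d <> mkV3 0 0 0 /\
     gen_refl_sym (Qpsi psi) (line p0 d)).
Proof.
  assert (Hs : forall psi, 0 < Rabs psi <= PI / 2 -> sin psi <> 0).
  { intros psi [H1 H2]. pose proof PI_RGT_0. destruct (Rcase_abs psi) as [Hn|Hp].
    - rewrite Rabs_left in * by auto. pose proof (sin_gt_0 (- psi)). rewrite sin_neg in H0. lra.
    - rewrite Rabs_right in * by auto. pose proof (sin_gt_0 psi). lra. }
  assert (Hc : forall psi, Rabs psi < PI / 2 -> cos psi <> 0).
  { intros psi H. apply Rabs_def2 in H. pose proof (cos_gt_0 psi). lra. }
  split; [|split; [|split; [|split; [|split]]]].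
  - pose proof (vert 0) as H. rewrite tan_0 in H. apply H. rewrite cos_0. lra.
  - intros psi [H1 H2]. apply vert. apply Hc; auto.
  - intros psi H. apply horiz. apply Hs; auto.
  - apply iiia.
  - apply iiib.
  - intro psi. destruct (Req_dec (sin psi) 0) as [H0|H0].
    + exists (mkV3 (tan psi) 0 0), (mkV3 0 0 1). split.
      * intro H; injection H; lra.
      * apply vert. intro Hc0. pose proof (sc psi). rewrite H0, Hc0 in H. lra.
    + exists (mkV3 (- (cos psi / sin psi)) 0 0), (mkV3 0 1 0). split.
      * intro H; injection H; lra.
      * apply horiz; auto.
Qed.
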